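(* Let $\mathbb{R}^{3,1}$ denote $\mathbb{R}^4$ with the inner product $\langle\langle X,Y\rangle\rangle = X_1Y_1+X_2Y_2+X_3Y_3-X_4Y_4$. Let $S\colon \mathbb{R}^2\to\mathbb{R}^{3,1}$ be a regular smooth net and let $P$ be an attached tangent isotropic hyperplane congruence of $S$ (definitions in the context). Let $N(u,v)$ be a normal vector (with respect to $\langle\langle\cdot,\cdot\rangle\rangle$) to $P(u,v)$ depending smoothly on $(u,v)$, and set $$L_P:=\langle\langle S_{uu},N\rangle\rangle=-\langle\langle S_u,N_u\rangle\rangle,\quad M_P:=\langle\langle S_{uv},N\rangle\rangle=-\langle\langle S_u,N_v\rangle\rangle=-\langle\langle S_v,N_u\rangle\rangle,\quad N_P:=\langle\langle S_{vv},N\rangle\rangle=-\langle\langle S_v,N_v\rangle\rangle .$$ Then two non-parallel tangent vectors $A=a_1S_u+a_2S_v$ and $B=b_1S_u+b_2S_v$ at a surface point $S(u,v)$ are L-conjugate with respect to $P$ if and only if $$L_Pa_1b_1+M_P(a_1b_2+a_2b_1)+N_Pa_2b_2=0 .$$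
   Context: An isotropic hyperplane ($\gamma$-hyperplane) in $\mathbb{R}^{3,1}$ is a hyperplane of the form $\{(x,x_4)\in\mathbb{R}^3\times\mathbb{R}: x_4=\langle n,x\rangle+h\}$ with $n\in\mathbb{R}^3$ a Euclidean unit vector and $h\in\mathbb{R}$; its normal vector $(n,1)$ is isotropic. A regular smooth net is a smooth map $S\colon\mathbb{R}^2\to\mathbb{R}^{3,1}$ with $S_u(u,v)$ not parallel to $S_v(u,v)$ at every $(u,v)$. An attached tangent isotropic hyperplane congruence is a smooth map $P$ assigning to each $(u,v)$ an isotropic hyperplane $P(u,v)$ such that $S(u,v)\in P(u,v)$ and $S_u(u,v),S_v(u,v)$ are parallel to $P(u,v)$. A reparametrization of $(S,P)$ is $(S\circ D,P\circ D)$ for a diffeomorphism $D\colon\mathbb{R}^2\to\mathbb{R}^2$. Two non-parallel tangent vectors $T_1,T_2$ at a surface point $X=S(u,v)$ are called L-conjugate with respect to $P$ if there is a reparametrization $(\bar S,\bar P)$ of $(S,P)$ such that, at the parameter corresponding to $X$, $\bar S_u\parallel T_1$, $\bar S_v\parallel T_2$, and $\bar S_u,\bar S_v,\bar S_{uv}$ are all parallel to the hyperplane $\bar P$. *)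

(* Defs.v *)
From Stdlib Require Import Reals List.
From Coquelicot Require Import Coquelicot.
Open Scope R_scope.

Record V4 := mkV4 { c1 : R; c2 : R; c3 : R; c4 : R }.

Definition vadd (X Y : V4) : V4 :=
  mkV4 (c1 X + c1 Y) (c2 X + c2 Y) (c3 X + c3 Y) (c4 X + c4 Y).
Definition vscal (a : R) (X : V4) : V4 :=
  mkV4 (a * c1 X) (a * c2 X) (a * c3 X) (a * c4 X).
Definition v0 : V4 := mkV4 0 0 0 0.

Definition mink (X Y : V4) : R :=
  c1 X * c1 Y + c2 X * c2 Y + c3 X * c3 Y - c4 X * c4 Y.

Definition par (X Y : V4) : Prop :=
  exists c : R, X = vscal c Y \/ Y = vscal c X.

Definition du (f : R -> R -> R) : R -> R -> R :=
  fun u v => Derive (fun t => f t v) u.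
Definition dv (f : R -> R -> R) : R -> R -> R :=
  fun u v => Derive (fun t => f u t) v.

Fixpoint iterD (w : list bool) (f : R -> R -> R) : R -> R -> R :=
  match w with
  | nil => f
  | b :: w' => if b then du (iterD w' f) else dv (iterD w' f)
  end.

Definition cont2 (g : R -> R -> R) : Prop :=
  forall u v eps, 0 < eps -> exists del, 0 < del /\
    forall u' v', Rabs (u' - u) < del -> Rabs (v' - v) < del ->
      Rabs (g u' v' - g u v) < eps.

Definition smooth2 (f : R -> R -> R) : Prop :=
  forall w : list bool,
    cont2 (iterD w f) /\
    (forall u v, ex_derive (fun t => iterD w f t v) u /\
                 ex_derive (fun t => iterD w f u t) v).

Definition smoothV (F : R -> R -> V4) : Prop :=
  smooth2 (fun u v => c1 (F u v)) /\ smooth2 (fun u v => c2 (F u v)) /\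
  smooth2 (fun u v => c3 (F u v)) /\ smooth2 (fun u v => c4 (F u v)).

Definition dU (F : R -> R -> V4) : R -> R -> V4 :=
  fun u v => mkV4 (du (fun a b => c1 (F a b)) u v) (du (fun a b => c2 (F a b)) u v)
                  (du (fun a b => c3 (F a b)) u v) (du (fun a b => c4 (F a b)) u v).
Definition dV (F : R -> R -> V4) : R -> R -> V4 :=
  fun u v => mkV4 (dv (fun a b => c1 (F a b)) u v) (dv (fun a b => c2 (F a b)) u v)
                  (dv (fun a b => c3 (F a b)) u v) (dv (fun a b => c4 (F a b)) u v).

Definition regular_net (S : R -> R -> V4) : Prop :=
  smoothV S /\ forall u v, ~ par (dU S u v) (dV S u v).

(** Isotropic hyperplane {(x,x4) : x4 = <n,x> + h}, n = (n1,n2,n3) a Euclidean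
    unit vector (the unit condition is imposed in [iso_congruence]). *)
Record IsoHyp := mkIsoHyp { hn1 : R; hn2 : R; hn3 : R; hh : R }.

Definition in_hyp (H : IsoHyp) (X : V4) : Prop :=
  c4 X = hn1 H * c1 X + hn2 H * c2 X + hn3 H * c3 X + hh H.

Definition par_hyp (H : IsoHyp) (X : V4) : Prop :=
  c4 X = hn1 H * c1 X + hn2 H * c2 X + hn3 H * c3 X.

Definition iso_congruence (P : R -> R -> IsoHyp) : Prop :=
  smooth2 (fun u v => hn1 (P u v)) /\ smooth2 (fun u v => hn2 (P u v)) /\
  smooth2 (fun u v => hn3 (P u v)) /\ smooth2 (fun u v => hh (P u v)) /\
  forall u v, hn1 (P u v) ^ 2 + hn2 (P u v) ^ 2 + hn3 (P u v) ^ 2 = 1.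

Definition tangent_congruence (S : R -> R -> V4) (P : R -> R -> IsoHyp) : Prop :=
  iso_congruence P /\
  forall u v, in_hyp (P u v) (S u v) /\ par_hyp (P u v) (dU S u v) /\
              par_hyp (P u v) (dV S u v).

Definition normal_to (H : IsoHyp) (N : V4) : Prop :=
  N <> v0 /\ forall X, par_hyp H X -> mink X N = 0.

Definition diffeo2 (D1 D2 : R -> R -> R) : Prop :=
  smooth2 D1 /\ smooth2 D2 /\
  exists E1 E2 : R -> R -> R, smooth2 E1 /\ smooth2 E2 /\
    (forall u v, D1 (E1 u v) (E2 u v) = u /\ D2 (E1 u v) (E2 u v) = v) /\
    (forall u v, E1 (D1 u v) (D2 u v) = u /\ E2 (D1 u v) (D2 u v) = v).

Definition L_conjugate (S : R -> R -> V4) (P : R -> R -> IsoHyp)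
    (u v : R) (T1 T2 : V4) : Prop :=
  exists D1 D2 : R -> R -> R, diffeo2 D1 D2 /\
    let Sb := fun a b => S (D1 a b) (D2 a b) in
    let Pb := fun a b => P (D1 a b) (D2 a b) in
    exists a b, D1 a b = u /\ D2 a b = v /\
      par (dU Sb a b) T1 /\ par (dV Sb a b) T2 /\
      par_hyp (Pb a b) (dU Sb a b) /\ par_hyp (Pb a b) (dV Sb a b) /\
      par_hyp (Pb a b) (dV (dU Sb) a b).

(* Main.v *)
Require Import Defs.
From Stdlib Require Import Reals.
From Coquelicot Require Import Coquelicot.
Open Scope R_scope.
From Stdlib Require Import Lra List FunctionalExtensionality.
Import Defs.


Lemma iterD_app w w' f : iterD (w ++ w') f = iterD w (iterD w' f).
Proof. induction w as [|b w IH]; simpl; [reflexivity| rewrite IH; reflexivity]. Qed.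

Lemma smooth2_du f : smooth2 f -> smooth2 (du f).
Proof. intros H w. pose proof (H (w ++ true :: nil)) as H'. rewrite iterD_app in H'. exact H'. Qed.
Lemma smooth2_dv f : smooth2 f -> smooth2 (dv f).
Proof. intros H w. pose proof (H (w ++ false :: nil)) as H'. rewrite iterD_app in H'. exact H'. Qed.

Lemma smooth2_intro f : cont2 f ->
  (forall u v, ex_derive (fun t => f t v) u /\ ex_derive (fun t => f u t) v) ->
  smooth2 (du f) -> smooth2 (dv f) -> smooth2 f.
Proof.
  intros Hc Hd Hu Hv w. destruct w as [|b w'] using rev_ind.
  - split; [exact Hc| exact Hd].
  - rewrite iterD_app. destruct b; simpl; [apply Hu|apply Hv].
Qed.

Lemma cont2_of g : (forall u v, continuity_2d_pt g u v) -> cont2 g.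
Proof.
  intros H u v eps He. destruct (H u v (mkposreal eps He)) as [d Hd].
  exists d. split; [apply cond_pos|]. intros; apply Hd; auto.
Qed.
Lemma cont2_to g u v : cont2 g -> continuity_2d_pt g u v.
Proof.
  intros H eps. destruct (H u v eps (cond_pos eps)) as [d [Hd0 Hd]].
  exists (mkposreal d Hd0). intros; apply Hd; auto.
Qed.

Lemma iterD_const w c : exists c', iterD w (fun _ _ => c) = fun _ _ => c'.
Proof.
  induction w as [|b w [c' IH]]; simpl.
  - exists c; reflexivity.
  - exists 0. rewrite IH. destruct b; apply functional_extensionality; intro x;
    apply functional_extensionality; intro y; unfold du, dv; apply Derive_const.
Qed.

Lemma smooth2_const c : smooth2 (fun _ _ => c).
Proof.
  intro w. destruct (iterD_const w c) as [c' E]. rewrite E. split.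
  - apply cont2_of. intros; apply continuity_2d_pt_const.
  - intros; split; apply ex_derive_const.
Qed.

Lemma smooth2_affine al be ga : smooth2 (fun x y => al + be * x + ga * y).
Proof.
  apply smooth2_intro.
  - apply cont2_of. intros u v.
    apply continuity_2d_pt_plus; [apply continuity_2d_pt_plus|].
    + apply continuity_2d_pt_const.
    + apply continuity_2d_pt_mult; [apply continuity_2d_pt_const|apply continuity_2d_pt_id1].
    + apply continuity_2d_pt_mult; [apply continuity_2d_pt_const|apply continuity_2d_pt_id2].
  - intros; split; auto_derive; auto.
  - replace (du (fun x y => al + be * x + ga * y)) with (fun _ _ : R => be).
    apply smooth2_const.
    apply functional_extensionality; intro x; apply functional_extensionality; intro y.
    unfold du. symmetry. apply is_derive_unique. auto_derive; auto; ring.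
  - replace (dv (fun x y => al + be * x + ga * y)) with (fun _ _ : R => ga).
    apply smooth2_const.
    apply functional_extensionality; intro x; apply functional_extensionality; intro y.
    unfold dv. symmetry. apply is_derive_unique. auto_derive; auto; ring.
Qed.

Lemma smooth_ex_diff n : forall f, smooth2 f -> forall x y, ex_diff_n f n x y.
Proof.
  induction n as [|n IH]; intros f H x y.
  - split; [apply cont2_to, (H nil)|exact I].
  - split; [apply cont2_to, (H nil)|]. 
    destruct (H nil) as [_ Hd]. simpl in Hd.
    split; [apply (Hd x y)|]. split; [apply (Hd x y)|].
    split.
    + apply (IH (du f)), smooth2_du, H.
    + apply (IH (dv f)), smooth2_dv, H.
Qed.

Lemma smooth_diff f x y : smooth2 f -> differentiable_pt_lim f x y (du f x y) (dv f x y).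
Proof.
  intros H.
  destruct (Taylor_Lagrange_2d f 1 x y) as [D [d Hd]].
  { exists (mkposreal 1 Rlt_0_1). intros; apply smooth_ex_diff, H. }
  assert (HD : forall u v, DL_pol 1 f x y (u - x) (v - y) = f x y + du f x y * (u - x) + dv f x y * (v - y)).
  { intros u v. unfold DL_pol, differential. simpl sum_f_R0. unfold C.
    replace (1 - 0)%nat with 1%nat by reflexivity.
    replace (1 - 1)%nat with 0%nat by reflexivity.
    replace (0 - 0)%nat with 0%nat by reflexivity.
    unfold partial_derive. simpl Derive_n. unfold du, dv. simpl Factorial.fact. simpl INR. unfold Binomial.C. simpl Factorial.fact. simpl INR. field. }
  intro eps.
  assert (Hpos : 0 < Rabs D + 1) by (pose proof (Rabs_pos D); lra).
  assert (Hp : 0 < Rmin d (eps / (Rabs D + 1))).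
  { apply Rmin_pos; [apply cond_pos|]. apply Rdiv_lt_0_compat; [apply cond_pos|lra]. }
  exists (mkposreal _ Hp). intros u v Hu Hv. simpl in Hu, Hv.
  pose proof (Rmin_l d (eps / (Rabs D + 1))) as Hm1.
  pose proof (Rmin_r d (eps / (Rabs D + 1))) as Hm2.
  specialize (Hd u v ltac:(lra) ltac:(lra)). rewrite HD in Hd.
  set (m := Rmax (Rabs (u - x)) (Rabs (v - y))) in *.
  assert (Hm0 : 0 <= m) by (unfold m; apply Rle_trans with (Rabs (u-x)); [apply Rabs_pos|apply Rmax_l]).
  assert (Hmb : m <= eps / (Rabs D + 1)).
  { unfold m. apply Rmax_lub; lra. }
  replace (f u v - f x y - (du f x y * (u - x) + dv f x y * (v - y))) with
    (f u v - (f x y + du f x y * (u - x) + dv f x y * (v - y))) by ring.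
  eapply Rle_trans; [exact Hd|].
  assert (HDa : D <= Rabs D) by apply Rle_abs.
  assert (Hmb' : m * (Rabs D + 1) <= eps).
  { apply (Rmult_le_compat_r (Rabs D + 1)) in Hmb; [|lra].
    unfold Rdiv in Hmb. rewrite Rmult_assoc, Rinv_l in Hmb; lra. }
  simpl. rewrite Rmult_1_r.
  apply Rle_trans with (Rabs D * (m * m)).
  { apply Rmult_le_compat_r; [apply Rmult_le_pos|]; lra. }
  apply Rle_trans with ((m * (Rabs D + 1)) * m).
  { assert (0 <= m * m) by (apply Rmult_le_pos; lra). nra. }
  apply Rmult_le_compat_r; lra.
Qed.


Lemma chain f X Y t lx ly : smooth2 f -> is_derive X t lx -> is_derive Y t ly ->
  is_derive (fun s => f (X s) (Y s)) t (du f (X t) (Y t) * lx + dv f (X t) (Y t) * ly).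
Proof.
  intros Hf HX HY. apply is_derive_Reals. apply derivable_pt_lim_comp_2d.
  - apply smooth_diff, Hf.
  - apply is_derive_Reals, HX.
  - apply is_derive_Reals, HY.
Qed.

Lemma is_derive_mult' f g x df dg : is_derive f x df -> is_derive g x dg ->
  is_derive (fun t => f t * g t) x (df * g x + f x * dg).
Proof.
  intros H1 H2. pose proof (is_derive_mult f g x df dg H1 H2) as H.
  apply H. intros; apply Rmult_comm.
Qed.

Lemma du_correct f a b : smooth2 f -> is_derive (fun t => f t b) a (du f a b).
Proof. intros H. apply Derive_correct. destruct (H nil) as [_ Hd]. apply (Hd a b). Qed.
Lemma dv_correct f a b : smooth2 f -> is_derive (fun t => f a t) b (dv f a b).
Proof. intros H. apply Derive_correct. destruct (H nil) as [_ Hd]. apply (Hd a b). Qed.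

Section Comp.
Variables (f D1 D2 : R -> R -> R).
Hypotheses (Hf : smooth2 f) (H1 : smooth2 D1) (H2 : smooth2 D2).
Let G := fun a b => f (D1 a b) (D2 a b).

Lemma comp_du a b : du G a b = du D1 a b * du f (D1 a b) (D2 a b) + du D2 a b * dv f (D1 a b) (D2 a b).
Proof.
  unfold G, du at 1. apply is_derive_unique.
  eapply is_derive_ext; [intro; reflexivity|].
  pose proof (chain f (fun t => D1 t b) (fun t => D2 t b) a _ _ Hf (du_correct D1 a b H1) (du_correct D2 a b H2)) as C.
  simpl in C. replace (du D1 a b * du f (D1 a b) (D2 a b) + du D2 a b * dv f (D1 a b) (D2 a b))
   with (du f (D1 a b) (D2 a b) * du D1 a b + dv f (D1 a b) (D2 a b) * du D2 a b) by ring.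
  exact C.
Qed.

Lemma comp_dv a b : dv G a b = dv D1 a b * du f (D1 a b) (D2 a b) + dv D2 a b * dv f (D1 a b) (D2 a b).
Proof.
  unfold G, dv at 1. apply is_derive_unique.
  pose proof (chain f (fun t => D1 a t) (fun t => D2 a t) b _ _ Hf (dv_correct D1 a b H1) (dv_correct D2 a b H2)) as C.
  simpl in C. replace (dv D1 a b * du f (D1 a b) (D2 a b) + dv D2 a b * dv f (D1 a b) (D2 a b))
   with (du f (D1 a b) (D2 a b) * dv D1 a b + dv f (D1 a b) (D2 a b) * dv D2 a b) by ring.
  exact C.
Qed.

Lemma comp_dvdu a b : dv (du G) a b =
  dv (du D1) a b * du f (D1 a b) (D2 a b)
  + du D1 a b * (du (du f) (D1 a b) (D2 a b) * dv D1 a b + dv (du f) (D1 a b) (D2 a b) * dv D2 a b)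
  + dv (du D2) a b * dv f (D1 a b) (D2 a b)
  + du D2 a b * (du (dv f) (D1 a b) (D2 a b) * dv D1 a b + dv (dv f) (D1 a b) (D2 a b) * dv D2 a b).
Proof.
  unfold dv at 1. rewrite (Derive_ext _ (fun t => du D1 a t * du f (D1 a t) (D2 a t) + du D2 a t * dv f (D1 a t) (D2 a t)))
    by (intro; apply comp_du).
  apply is_derive_unique.
  pose proof (chain (du f) (fun t => D1 a t) (fun t => D2 a t) b _ _ (smooth2_du f Hf) (dv_correct D1 a b H1) (dv_correct D2 a b H2)) as C1.
  pose proof (chain (dv f) (fun t => D1 a t) (fun t => D2 a t) b _ _ (smooth2_dv f Hf) (dv_correct D1 a b H1) (dv_correct D2 a b H2)) as C2.
  pose proof (is_derive_mult' _ _ _ _ _ (dv_correct (du D1) a b (smooth2_du _ H1)) C1) as M1.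
  pose proof (is_derive_mult' _ _ _ _ _ (dv_correct (du D2) a b (smooth2_du _ H2)) C2) as M2.
  pose proof (is_derive_plus _ _ _ _ _ M1 M2) as P.
  simpl in P. unfold plus in P; simpl in P.
  repeat rewrite Rplus_assoc. repeat rewrite Rplus_assoc in P. exact P.
Qed.
End Comp.


Lemma schwarz2 f x y : smooth2 f -> du (dv f) x y = dv (du f) x y.
Proof.
  intros H. unfold du at 1. unfold dv at 2. apply Schwarz.
  - exists (mkposreal 1 Rlt_0_1). intros u v _ _.
    destruct (H nil) as [_ Hd]. destruct (smooth2_dv f H nil) as [_ Hdv].
    destruct (smooth2_du f H nil) as [_ Hdu].
    split; [apply (Hd u v)|]. split; [apply (Hd u v)|]. split; [apply (Hdv u v)|apply (Hdu u v)].
  - intro eps. destruct (H (true :: false :: nil)) as [Hc _].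
    apply (cont2_to _ x y Hc eps).
  - intro eps. destruct (H (false :: true :: nil)) as [Hc _].
    apply (cont2_to _ x y Hc eps).
Qed.

Lemma normal_iff H N X : normal_to H N -> (par_hyp H X <-> mink X N = 0).
Proof.
  destruct H as [n1 n2 n3 h], N as [N1 N2 N3 N4], X as [x1 x2 x3 x4].
  unfold normal_to, par_hyp, mink, v0; simpl. intros [Hne Hp].
  pose proof (Hp (mkV4 1 0 0 n1) ltac:(simpl; ring)) as e1.
  pose proof (Hp (mkV4 0 1 0 n2) ltac:(simpl; ring)) as e2.
  pose proof (Hp (mkV4 0 0 1 n3) ltac:(simpl; ring)) as e3.
  unfold mink in e1, e2, e3; simpl in e1, e2, e3.
  assert (E1 : N1 = n1 * N4) by lra.
  assert (E2 : N2 = n2 * N4) by lra.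
  assert (E3 : N3 = n3 * N4) by lra.
  assert (N4ne : N4 <> 0).
  { intro Z. apply Hne. rewrite E1, E2, E3, Z. f_equal; ring. }
  rewrite E1, E2, E3. split.
  - intro Hx. rewrite Hx. ring.
  - intro Hm. assert (N4 * (n1 * x1 + n2 * x2 + n3 * x3 - x4) = 0) by (rewrite <- Hm; ring).
    destruct (Rmult_integral _ _ H) as [Z|Z]; [contradiction|lra].
Qed.

Lemma indep X Y al be : ~ par X Y ->
  al * c1 X + be * c1 Y = 0 -> al * c2 X + be * c2 Y = 0 ->
  al * c3 X + be * c3 Y = 0 -> al * c4 X + be * c4 Y = 0 -> al = 0 /\ be = 0.
Proof.
  destruct X as [x1 x2 x3 x4], Y as [y1 y2 y3 y4]; simpl. intros Hnp h1 h2 h3 h4.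
  destruct (Req_dec al 0) as [Ha|Ha].
  - subst al. split; [reflexivity|]. destruct (Req_dec be 0) as [Hb|Hb]; [exact Hb|].
    exfalso. apply Hnp. exists 0. right. unfold vscal; simpl.
    f_equal; apply (Rmult_eq_reg_l be); auto; lra.
  - exfalso. apply Hnp. exists (- be / al). left. unfold vscal; simpl.
    f_equal; field_simplify; auto; apply (Rmult_eq_reg_l al); auto; field_simplify; auto; lra.
Qed.

Lemma mink_add X Y Z : mink (vadd X Y) Z = mink X Z + mink Y Z.
Proof. unfold mink, vadd; simpl; ring. Qed.
Lemma mink_scal a X Z : mink (vscal a X) Z = a * mink X Z.
Proof. unfold mink, vscal; simpl; ring. Qed.
Lemma par_hyp_lin H a b X Y : par_hyp H X -> par_hyp H Y -> par_hyp H (vadd (vscal a X) (vscal b Y)).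
Proof. unfold par_hyp, vadd, vscal; simpl. intros h1 h2. rewrite h1, h2. ring. Qed.

Lemma key (S : R -> R -> V4) (P : R -> R -> IsoHyp) (N : R -> R -> V4) D1 D2 a b u v :
  smoothV S -> tangent_congruence S P -> (forall u v, normal_to (P u v) (N u v)) ->
  smooth2 D1 -> smooth2 D2 -> D1 a b = u -> D2 a b = v ->
  dU (fun x y => S (D1 x y) (D2 x y)) a b = vadd (vscal (du D1 a b) (dU S u v)) (vscal (du D2 a b) (dV S u v)) /\
  dV (fun x y => S (D1 x y) (D2 x y)) a b = vadd (vscal (dv D1 a b) (dU S u v)) (vscal (dv D2 a b) (dV S u v)) /\
  mink (dV (dU (fun x y => S (D1 x y) (D2 x y))) a b) (N u v) =
    mink (dU (dU S) u v) (N u v) * du D1 a b * dv D1 a b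
    + mink (dV (dU S) u v) (N u v) * (du D1 a b * dv D2 a b + du D2 a b * dv D1 a b)
    + mink (dV (dV S) u v) (N u v) * du D2 a b * dv D2 a b.
Proof.
  intros [Hs1 [Hs2 [Hs3 Hs4]]] [_ HT] HN H1 H2 Ea Eb.
  destruct (HT u v) as [_ [Tu Tv]].
  assert (mu : mink (dU S u v) (N u v) = 0) by (apply (normal_iff (P u v)); auto).
  assert (mv : mink (dV S u v) (N u v) = 0) by (apply (normal_iff (P u v)); auto).
  pose proof (comp_du _ D1 D2 Hs1 H1 H2 a b) as U1.
  pose proof (comp_du _ D1 D2 Hs2 H1 H2 a b) as U2.
  pose proof (comp_du _ D1 D2 Hs3 H1 H2 a b) as U3.
  pose proof (comp_du _ D1 D2 Hs4 H1 H2 a b) as U4.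
  pose proof (comp_dv _ D1 D2 Hs1 H1 H2 a b) as Y1.
  pose proof (comp_dv _ D1 D2 Hs2 H1 H2 a b) as Y2.
  pose proof (comp_dv _ D1 D2 Hs3 H1 H2 a b) as Y3.
  pose proof (comp_dv _ D1 D2 Hs4 H1 H2 a b) as Y4.
  pose proof (comp_dvdu _ D1 D2 Hs1 H1 H2 a b) as W1.
  pose proof (comp_dvdu _ D1 D2 Hs2 H1 H2 a b) as W2.
  pose proof (comp_dvdu _ D1 D2 Hs3 H1 H2 a b) as W3.
  pose proof (comp_dvdu _ D1 D2 Hs4 H1 H2 a b) as W4.
  pose proof (schwarz2 _ u v Hs1) as Z1.
  pose proof (schwarz2 _ u v Hs2) as Z2.
  pose proof (schwarz2 _ u v Hs3) as Z3.
  pose proof (schwarz2 _ u v Hs4) as Z4.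
  rewrite Ea, Eb in U1, U2, U3, U4, Y1, Y2, Y3, Y4, W1, W2, W3, W4.
  rewrite Z1 in W1. rewrite Z2 in W2. rewrite Z3 in W3. rewrite Z4 in W4.
  split; [|split].
  - unfold dU at 1. rewrite U1, U2, U3, U4. unfold vadd, vscal, dU, dV; simpl. f_equal; ring.
  - unfold dV at 1. rewrite Y1, Y2, Y3, Y4. unfold vadd, vscal, dU, dV; simpl. f_equal; ring.
  - set (Q := dV (dU (fun x y => S (D1 x y) (D2 x y))) a b).
    assert (EQ : Q = vadd (vscal (dv (du D1) a b) (dU S u v)) (vadd (vscal (dv (du D2) a b) (dV S u v))
       (vadd (vscal (du D1 a b * dv D1 a b) (dU (dU S) u v))
       (vadd (vscal (du D1 a b * dv D2 a b + du D2 a b * dv D1 a b) (dV (dU S) u v))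
             (vscal (du D2 a b * dv D2 a b) (dV (dV S) u v)))))).
    { unfold Q. unfold vadd, vscal, dU, dV. cbn [c1 c2 c3 c4].
      unfold du, dv in *. cbv beta in *. rewrite W1, W2, W3, W4. f_equal; ring. }
    rewrite EQ. rewrite !mink_add, !mink_scal, mu, mv. ring.
Qed.


Lemma jac D1 D2 a b : diffeo2 D1 D2 ->
  (du D1 a b <> 0 \/ du D2 a b <> 0) /\ (dv D1 a b <> 0 \/ dv D2 a b <> 0).
Proof.
  intros [H1 [H2 [E1 [E2 [HE1 [HE2 [_ HED]]]]]]].
  assert (A1 : Derive (fun t => E1 (D1 t b) (D2 t b)) a = 1).
  { rewrite (Derive_ext _ (fun t => t)) by (intro; apply HED). apply Derive_id. }
  assert (A2 : Derive (fun t => E2 (D1 a t) (D2 a t)) b = 1).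
  { rewrite (Derive_ext _ (fun t => t)) by (intro; apply HED). apply Derive_id. }
  pose proof (chain E1 (fun t => D1 t b) (fun t => D2 t b) a _ _ HE1 (du_correct D1 a b H1) (du_correct D2 a b H2)) as C1.
  pose proof (chain E2 (fun t => D1 a t) (fun t => D2 a t) b _ _ HE2 (dv_correct D1 a b H1) (dv_correct D2 a b H2)) as C2.
  cbv beta in C1, C2.
  assert (U1 : 1 = du E1 (D1 a b) (D2 a b) * du D1 a b + dv E1 (D1 a b) (D2 a b) * du D2 a b)
    by (rewrite <- A1; apply is_derive_unique; exact C1).
  assert (U2 : 1 = du E2 (D1 a b) (D2 a b) * dv D1 a b + dv E2 (D1 a b) (D2 a b) * dv D2 a b)
    by (rewrite <- A2; apply is_derive_unique; exact C2).
  clear A1 A2. rename U1 into A1. rename U2 into A2.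
  split.
  - destruct (Req_dec (du D1 a b) 0) as [Z1|Z1]; [|left; exact Z1].
    destruct (Req_dec (du D2 a b) 0) as [Z2|Z2]; [|right; exact Z2].
    exfalso. rewrite Z1, Z2 in A1. lra.
  - destruct (Req_dec (dv D1 a b) 0) as [Z1|Z1]; [|left; exact Z1].
    destruct (Req_dec (dv D2 a b) 0) as [Z2|Z2]; [|right; exact Z2].
    exfalso. rewrite Z1, Z2 in A2. lra.
Qed.

Lemma alg L M Nn p q r s a1 a2 b1 b2 :
  L * p * r + M * (p * s + q * r) + Nn * q * s = 0 ->
  (p <> 0 \/ q <> 0) -> (r <> 0 \/ s <> 0) ->
  ((exists c, p = c * a1 /\ q = c * a2) \/ (exists c, a1 = c * p /\ a2 = c * q)) ->
  ((exists c, r = c * b1 /\ s = c * b2) \/ (exists c, b1 = c * r /\ b2 = c * s)) ->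
  L * a1 * b1 + M * (a1 * b2 + a2 * b1) + Nn * a2 * b2 = 0.
Proof.
  intros K Hpq Hrs [[c [e1 e2]]|[c [e1 e2]]] [[d [f1 f2]]|[d [f1 f2]]].
  - assert (c <> 0) by (intro Z; subst; destruct Hpq; lra).
    assert (d <> 0) by (intro Z; subst; destruct Hrs; lra).
    subst p q r s.
    assert (E : c * d * (L * a1 * b1 + M * (a1 * b2 + a2 * b1) + Nn * a2 * b2) = 0) by (rewrite <- K; ring).
    destruct (Rmult_integral _ _ E) as [Z|Z]; [|exact Z].
    destruct (Rmult_integral _ _ Z); contradiction.
  - assert (c <> 0) by (intro Z; subst; destruct Hpq; lra).
    subst p q b1 b2.
    assert (E : c * (L * a1 * (d * r) + M * (a1 * (d * s) + a2 * (d * r)) + Nn * a2 * (d * s)) = d * 0) by (rewrite <- K; ring).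
    destruct (Rmult_integral _ _ (eq_trans E (Rmult_0_r d))) as [Z|Z]; [contradiction|exact Z].
  - assert (d <> 0) by (intro Z; subst; destruct Hrs; lra).
    subst a1 a2 r s.
    assert (E : d * (L * (c * p) * b1 + M * (c * p * b2 + c * q * b1) + Nn * (c * q) * b2) = c * 0) by (rewrite <- K; ring).
    destruct (Rmult_integral _ _ (eq_trans E (Rmult_0_r c))) as [Z|Z]; [contradiction|exact Z].
  - subst a1 a2 b1 b2. replace 0 with (c * d * 0) by ring. rewrite <- K. ring.
Qed.

Lemma par_coef X Y al be ga de : ~ par X Y ->
  par (vadd (vscal al X) (vscal be Y)) (vadd (vscal ga X) (vscal de Y)) ->
  (exists c, al = c * ga /\ be = c * de) \/ (exists c, ga = c * al /\ de = c * be).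
Proof.
  intros Hn [c [h|h]].
  - left. exists c. pose proof (f_equal c1 h) as h1. pose proof (f_equal c2 h) as h2.
    pose proof (f_equal c3 h) as h3. pose proof (f_equal c4 h) as h4. simpl in h1, h2, h3, h4.
    destruct (indep X Y (al - c * ga) (be - c * de) Hn) as [z1 z2]; try lra.
  - right. exists c. pose proof (f_equal c1 h) as h1. pose proof (f_equal c2 h) as h2.
    pose proof (f_equal c3 h) as h3. pose proof (f_equal c4 h) as h4. simpl in h1, h2, h3, h4.
    destruct (indep X Y (ga - c * al) (de - c * be) Hn) as [z1 z2]; try lra.
Qed.


Lemma du_aff al be ga x y : du (fun x y => al + be * x + ga * y) x y = be.
Proof. unfold du. apply is_derive_unique. auto_derive; auto; ring. Qed.
Lemma dv_aff al be ga x y : dv (fun x y => al + be * x + ga * y) x y = ga.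
Proof. unfold dv. apply is_derive_unique. auto_derive; auto; ring. Qed.

From Coquelicot Require Import Coquelicot.

Theorem theorem1 (S : R -> R -> V4) (P : R -> R -> IsoHyp) (N : R -> R -> V4)
  (HS : regular_net S) (HP : tangent_congruence S P)
  (HNs : smoothV N) (HN : forall u v, normal_to (P u v) (N u v))
  (u v a1 a2 b1 b2 : R) :
  let LP := mink (dU (dU S) u v) (N u v) in
  let MP := mink (dV (dU S) u v) (N u v) in
  let NP := mink (dV (dV S) u v) (N u v) in
  let A := vadd (vscal a1 (dU S u v)) (vscal a2 (dV S u v)) in
  let B := vadd (vscal b1 (dU S u v)) (vscal b2 (dV S u v)) in
  ~ par A B ->
  (L_conjugate S P u v A B <->
   LP * a1 * b1 + MP * (a1 * b2 + a2 * b1) + NP * a2 * b2 = 0).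
Proof.
  intros LP MP NP A B HAB.
  destruct HS as [HSs Hreg].
  split.
  - intros [D1 [D2 [Hd Hex]]]. cbv zeta in Hex.
    destruct Hex as [a [b [Ea [Eb [Hpu [Hpv [_ [_ Hh3]]]]]]]].
    pose proof (jac D1 D2 a b Hd) as [J1 J2].
    destruct Hd as [H1 [H2 _]].
    destruct (key S P N D1 D2 a b u v HSs HP HN H1 H2 Ea Eb) as [K1 [K2 K3]].
    rewrite Ea, Eb in Hh3.
    apply (normal_iff _ _ _ (HN u v)) in Hh3. rewrite Hh3 in K3.
    rewrite K1 in Hpu. rewrite K2 in Hpv.
    apply (alg _ _ _ _ _ _ _ _ _ _ _ (eq_sym K3) J1 J2).
    + apply (par_coef _ _ _ _ _ _ (Hreg u v) Hpu).
    + apply (par_coef _ _ _ _ _ _ (Hreg u v) Hpv).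
  - intros HII.
    set (de := a1 * b2 - a2 * b1).
    assert (Hde : de <> 0).
    { intro Z. apply HAB. unfold A, B.
      destruct (Req_dec a1 0) as [Za1|Za1]; destruct (Req_dec a2 0) as [Za2|Za2].
      - exists 0. left. rewrite Za1, Za2. unfold vadd, vscal; simpl. f_equal; ring.
      - exists (b2 / a2). right. unfold de in Z. unfold vadd, vscal; simpl.
        assert (b1 = b2 / a2 * a1) by (field_simplify; auto; apply (Rmult_eq_reg_l a2); auto; field_simplify; auto; lra).
        f_equal; field_simplify; auto; rewrite H; field; auto.
      - exists (b1 / a1). right. unfold de in Z. unfold vadd, vscal; simpl.
        assert (b2 = b1 / a1 * a2) by (field_simplify; auto; apply (Rmult_eq_reg_l a1); auto; field_simplify; auto; lra).
        f_equal; field_simplify; auto; rewrite H; field; auto.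
      - exists (b1 / a1). right. unfold de in Z. unfold vadd, vscal; simpl.
        assert (b2 = b1 / a1 * a2) by (field_simplify; auto; apply (Rmult_eq_reg_l a1); auto; field_simplify; auto; lra).
        f_equal; field_simplify; auto; rewrite H; field; auto. }
    exists (fun x y => u + a1 * x + b1 * y), (fun x y => v + a2 * x + b2 * y).
    assert (H1 : smooth2 (fun x y => u + a1 * x + b1 * y)) by apply smooth2_affine.
    assert (H2 : smooth2 (fun x y => v + a2 * x + b2 * y)) by apply smooth2_affine.
    split.
    { split; [exact H1|]. split; [exact H2|].
      exists (fun x y => (- b2 * u + b1 * v) / de + (b2 / de) * x + (- b1 / de) * y),
             (fun x y => (a2 * u - a1 * v) / de + (- a2 / de) * x + (a1 / de) * y).
      split; [apply smooth2_affine|]. split; [apply smooth2_affine|].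
      split; intros x y; split; unfold de in *; field; auto. }
    cbv zeta. exists 0, 0.
    assert (Ea : u + a1 * 0 + b1 * 0 = u) by ring.
    assert (Eb : v + a2 * 0 + b2 * 0 = v) by ring.
    destruct (key S P N _ _ 0 0 u v HSs HP HN H1 H2 Ea Eb) as [K1 [K2 K3]].
    rewrite du_aff, du_aff in K1. rewrite dv_aff, dv_aff in K2.
    rewrite du_aff, du_aff, dv_aff, dv_aff in K3.
    cbv beta. rewrite K1, K2, Ea, Eb.
    destruct HP as [_ HT]. destruct (HT u v) as [_ [Tu Tv]].
    split; [reflexivity|]. split; [reflexivity|].
    split; [exists 1; left; unfold A, vadd, vscal; simpl; f_equal; ring|].
    split; [exists 1; left; unfold B, vadd, vscal; simpl; f_equal; ring|].
    split; [apply par_hyp_lin; auto|]. split; [apply par_hyp_lin; auto|].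
    apply (normal_iff _ _ _ (HN u v)). rewrite K3. exact HII.
Qed.
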